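(* Let $A\in\mathbb{R}^{M\times M}$ be symmetric with eigenvalues $\lambda_1,\ldots,\lambda_M\in\mathbb{R}$, let $k_n,k_p,k_u>0$, and define the symmetric matrix $$Q=\begin{pmatrix}\frac{k_p}{k_n}A&0&\frac{I_M}{2k_n}\\0&\frac{k_p}{k_n}A&\frac{k_u}{2k_n}A\\\frac{I_M}{2k_n}&\frac{k_u}{2k_n}A&k_uA\end{pmatrix}.$$ Then: (1) the $3M$ eigenvalues of $Q$ are, for $i=1,\ldots,M$, $$\mu_1(\lambda_i)=\frac{k_p}{k_n}\lambda_i,\quad \mu_2(\lambda_i)=\frac{\lambda_ik_1-\sqrt{1+\lambda_i^2k_2}}{2k_n},\quad \mu_3(\lambda_i)=\frac{\lambda_ik_1+\sqrt{1+\lambda_i^2k_2}}{2k_n},$$ with $k_1=k_p+k_nk_u>0$ and $k_2=k_u^2+(k_p-k_nk_u)^2>0$; (2) if $\lambda_1\le\lambda_2\le\cdots\le\lambda_M<0$ and $k_n$ is such that $\lambda_M^2(4k_nk_pk_u-k_u^2)>1$, then $\mu_j(\lambda_i)<0$ for all $j=1,2,3$ and $i=1,\ldots,M$, and $\mu_3(\lambda_M)=\max_{j\in\{1,2,3\},\,i\in\{1,\ldots,M\}}\mu_j(\lambda_i)$. *)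

(* Defs.v *)
From HB Require Import structures.
From mathcomp Require Import all_boot all_order all_algebra.
Set Implicit Arguments. Unset Strict Implicit. Unset Printing Implicit Defensive.
Import Order.TTheory GRing.Theory Num.Theory.
Local Open Scope ring_scope.

Section Defs.
Variable R : rcfType.

Definition k1 (kn kp ku : R) : R := kp + kn * ku.
Definition k2 (kn kp ku : R) : R := ku ^+ 2 + (kp - kn * ku) ^+ 2.

Definition mu1 (kn kp ku l : R) : R := kp / kn * l.
Definition mu2 (kn kp ku l : R) : R :=
  (l * k1 kn kp ku - Num.sqrt (1 + l ^+ 2 * k2 kn kp ku)) / (2 * kn).
Definition mu3 (kn kp ku l : R) : R :=
  (l * k1 kn kp ku + Num.sqrt (1 + l ^+ 2 * k2 kn kp ku)) / (2 * kn).

(* mu_j for j = 1,2,3 indexed by 'I_3 (j = 0,1,2) *)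
Definition mu (kn kp ku : R) (j : 'I_3) (l : R) : R :=
  match val j with
  | 0%N => mu1 kn kp ku l
  | 1%N => mu2 kn kp ku l
  | _ => mu3 kn kp ku l
  end.

Definition Qmat (M : nat) (kn kp ku : R) (A : 'M[R]_M) : 'M[R]_(M + M + M) :=
  block_mx
    (block_mx ((kp / kn) *: A) 0 0 ((kp / kn) *: A))
    (col_mx (1 / (2 * kn))%:M ((ku / (2 * kn)) *: A))
    (row_mx (1 / (2 * kn))%:M ((ku / (2 * kn)) *: A))
    (ku *: A).

End Defs.

(* Main.v *)
Require Import Defs.
From HB Require Import structures.
From mathcomp Require Import all_boot all_order all_algebra.
From mathcomp Require Import ring lra.
Import Order.TTheory GRing.Theory Num.Theory.
Local Open Scope ring_scope.

Module Helpers.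
Set Implicit Arguments.
Lemma evalcp (R : comNzRingType) n (B : 'M[R]_n) x :
  (char_poly B).[x] = \det (x%:M - B).
Proof.
rewrite /char_poly -horner_evalE -det_map_mx; congr (\det _).
apply/matrixP => i j; rewrite !mxE /horner_evalE /=.
by rewrite horner_evalE hornerD hornerN hornerMn hornerX hornerC.
Qed.

Lemma detsub (R : comNzRingType) n (B : 'M[R]_n) (lam : 'I_n -> R) x :
  char_poly B = \prod_(i < n) ('X - (lam i)%:P) ->
  \det (x%:M - B) = \prod_(i < n) (x - lam i).
Proof.
move=> h; rewrite -evalcp h horner_prod; apply: eq_bigr => i _.
by rewrite hornerXsubC.
Qed.

Lemma prodZ (R : comNzRingType) n (F : 'I_n -> R) a :
  a ^+ n * \prod_(i < n) F i = \prod_(i < n) (a * F i).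
Proof. by rewrite big_split /= prodr_const card_ord. Qed.

Lemma detsub' (R : comNzRingType) n (B : 'M[R]_n) (lam : 'I_n -> R) x :
  char_poly B = \prod_(i < n) ('X - (lam i)%:P) ->
  \det (B - x%:M) = \prod_(i < n) (lam i - x).
Proof.
move=> h; rewrite -opprB -scaleN1r detZ (@detsub _ _ _ _ x h) prodZ.
by apply: eq_bigr => i _; rewrite mulN1r opprB.
Qed.

Lemma det_quad (R : fieldType) n (A : 'M[R]_n) (lam : 'I_n -> R) al be ga y1 y2 :
  char_poly A = \prod_(i < n) ('X - (lam i)%:P) ->
  be = - (ga * (y1 + y2)) -> al = ga * (y1 * y2) ->
  \det (al%:M + be *: A + ga *: (A *m A))
  = \prod_(i < n) (al + be * lam i + ga * lam i ^+ 2).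
Proof.
move=> h -> ->.
have -> : (ga * (y1 * y2))%:M + - (ga * (y1 + y2)) *: A + ga *: (A *m A)
   = ga *: ((A - y1%:M) *m (A - y2%:M)).
  rewrite mulmxBl !mulmxBr mul_mx_scalar mul_scalar_mx -scalar_mxM.
  apply/matrixP => i j; rewrite !mxE.
  by case: (i == j); rewrite ?mulr1n ?mulr0n; ring.
rewrite detZ det_mulmx (@detsub' _ _ _ _ y1 h) (@detsub' _ _ _ _ y2 h) -big_split /= prodZ.
by apply: eq_bigr => i _; ring.
Qed.

Lemma det_lin (R : fieldType) n (A : 'M[R]_n) (lam : 'I_n -> R) al be :
  char_poly A = \prod_(i < n) ('X - (lam i)%:P) -> be != 0 ->
  \det (al%:M + be *: A) = \prod_(i < n) (al + be * lam i).
Proof.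
move=> h nz.
have -> : al%:M + be *: A = be *: (A - (- al / be)%:M).
  apply/matrixP => i j; rewrite !mxE.
  by case: (i == j); rewrite ?mulr1n ?mulr0n; field.
rewrite detZ (@detsub' _ _ _ _ (- al / be) h) prodZ.
by apply: eq_bigr => i _; field.
Qed.

Lemma det_block3 (F : fieldType) n (P V1 V2 U1 U2 W : 'M[F]_n) :
  P *m V1 = V1 *m P -> P *m V2 = V2 *m P -> \det P != 0 ->
  \det (block_mx (block_mx P 0 0 P) (col_mx U1 U2) (row_mx V1 V2) W)
  = \det P * \det (P *m W - V1 *m U1 - V2 *m U2).
Proof.
move=> c1 c2 nz.
pose L := block_mx (1%:M : 'M_(n + n)) 0 (row_mx (- V1) (- V2)) P.
have dL : \det L = \det P by rewrite det_lblock det1 mul1r.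
have e : L *m block_mx (block_mx P 0 0 P) (col_mx U1 U2) (row_mx V1 V2) W
  = block_mx (block_mx P 0 0 P) (col_mx U1 U2) 0 (P *m W - V1 *m U1 - V2 *m U2).
  rewrite mulmx_block !mul1mx !mul0mx !addr0; congr block_mx.
    rewrite mul_row_block !mulmx0 !addr0 !add0r mul_mx_row.
    by rewrite !mulNmx c1 c2 add_row_mx !addNr row_mx0.
  by rewrite mul_row_col !mulNmx addrC addrA.
have := congr1 determinant e; rewrite det_mulmx dL det_ublock det_ublock => h.
by apply: (mulfI nz); rewrite h mulrA.
Qed.

Lemma Qblock (R : rcfType) M (A : 'M[R]_M) kn kp ku x :
  x%:M - Qmat kn kp ku A =
  block_mx (block_mx (x%:M - (kp / kn) *: A) 0 0 (x%:M - (kp / kn) *: A))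
    (col_mx (- (1 / (2 * kn))%:M) (- ((ku / (2 * kn)) *: A)))
    (row_mx (- (1 / (2 * kn))%:M) (- ((ku / (2 * kn)) *: A)))
    (x%:M - ku *: A).
Proof.
rewrite /Qmat [x%:M]scalar_mx_block [x%:M : 'M_(M + M)]scalar_mx_block.
rewrite opp_block_mx add_block_mx opp_block_mx add_block_mx.
by rewrite !subr0 opp_col_mx opp_row_mx !add0r.
Qed.
Lemma fact_i (R : rcfType) (kn kp ku l x : R) : 0 < kn -> 0 <= k2 kn kp ku ->
  (x + - (kp / kn) * l) *
  ((x ^+ 2 - (1 / (2 * kn)) ^+ 2) + (- (x * (kp / kn + ku))) * l
    + (kp / kn * ku - (ku / (2 * kn)) ^+ 2) * l ^+ 2)
  = (('X - (mu1 kn kp ku l)%:P) * ('X - (mu2 kn kp ku l)%:P)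
       * ('X - (mu3 kn kp ku l)%:P)).[x].
Proof.
move=> kn0 k20.
rewrite !hornerM !hornerXsubC /mu1 /mu2 /mu3 -[RHS]mulrA.
have k2l : 0 <= 1 + l ^+ 2 * k2 kn kp ku.
  by rewrite addr_ge0 // mulr_ge0 // sqr_ge0.
have hs := sqr_sqrtr k2l.
move: (Num.sqrt _) hs => s hs.
have kn' : kn != 0 by rewrite gt_eqF.
have -> : (x - (l * k1 kn kp ku - s) / (2 * kn)) * (x - (l * k1 kn kp ku + s) / (2 * kn))
  = x ^+ 2 - x * l * k1 kn kp ku / kn + (l ^+ 2 * k1 kn kp ku ^+ 2 - s ^+ 2) / (4 * kn ^+ 2).
  by field.
by rewrite hs /k1 /k2; field.
Qed.

Lemma detQ (R : rcfType) M (A : 'M[R]_M) (lam : 'I_M -> R) kn kp ku x :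
  char_poly A = \prod_(i < M) ('X - (lam i)%:P) ->
  0 < kn -> 0 < kp -> 0 < ku -> 1 / (2 * kn) <= x ->
  (forall i, x != kp / kn * lam i) ->
  \det (x%:M - Qmat kn kp ku A) =
  (\prod_(i < M) (('X - (mu1 kn kp ku (lam i))%:P) *
                    ('X - (mu2 kn kp ku (lam i))%:P) *
                    ('X - (mu3 kn kp ku (lam i))%:P))).[x].
Proof.
move=> hA kn0 kp0 ku0 xc xl.
set a := kp / kn; set b := ku / (2 * kn); set c := 1 / (2 * kn).
have kn' : kn != 0 by rewrite gt_eqF.
have a0 : 0 < a by rewrite divr_gt0.
have c0 : 0 < c by rewrite divr_gt0 // mulr_gt0.
have x0 : 0 < x by apply: lt_le_trans xc.
have eP : x%:M - a *: A = x%:M + (- a) *: A by rewrite scaleNr.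
have dP : \det (x%:M - a *: A) = \prod_(i < M) (x + - a * lam i).
  by rewrite eP (det_lin lam x (- a) hA) // oppr_eq0 gt_eqF.
have nzP : \det (x%:M - a *: A) != 0.
  rewrite dP; apply/prodf_neq0 => i _; rewrite mulNr subr_eq0; exact: xl.
have cm : forall (d : R), (x%:M - a *: A) *m (d *: A) = (d *: A) *m (x%:M - a *: A).
  move=> d; rewrite mulmxBl mulmxBr mul_mx_scalar mul_scalar_mx.
  by rewrite -!scalemxAl -!scalemxAr !scalerA [a * d]mulrC.
rewrite Qblock det_block3; first last.
- exact: nzP.
- by rewrite mulmxN mulNmx cm.
- by rewrite mulmxN mulNmx scalar_mxC.
have eS : (x%:M - a *: A) *m (x%:M - ku *: A) - - c%:M *m - c%:M
      - - (b *: A) *m - (b *: A)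
    = (x ^+ 2 - c ^+ 2)%:M + (- (x * (a + ku))) *: A
      + (a * ku - b ^+ 2) *: (A *m A).
  rewrite !mulmxN !mulNmx !opprK mulmxBl !mulmxBr !mul_mx_scalar !mul_scalar_mx.
  rewrite -!scalemxAl -!scalemxAr.
  apply/matrixP => i j; rewrite !mxE.
  by case: (i == j); rewrite ?mulr1n ?mulr0n; ring.
rewrite eS dP.
have k20 : 0 <= k2 kn kp ku by rewrite /k2 addr_ge0 // sqr_ge0.
have -> : \det ((x ^+ 2 - c ^+ 2)%:M + - (x * (a + ku)) *: A +
     (a * ku - b ^+ 2) *: (A *m A)) =
   \prod_(i < M) ((x ^+ 2 - c ^+ 2) + (- (x * (a + ku))) * lam i
        + (a * ku - b ^+ 2) * lam i ^+ 2).
  have [g0|g0] := eqVneq (a * ku - b ^+ 2) 0.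
    under eq_bigr do rewrite g0 mul0r addr0.
    rewrite g0 scale0r addr0 (det_lin lam _ _ hA) // oppr_eq0 mulf_neq0 ?gt_eqF //.
    by rewrite addr_gt0.
  set al := x ^+ 2 - c ^+ 2; set be := - (x * (a + ku)); set ga := a * ku - b ^+ 2.
  have dd : 0 <= be ^+ 2 - 4 * al * ga.
    rewrite /al /be /ga.
    have : c ^+ 2 <= x ^+ 2 by rewrite lerXn2r // ?nnegrE ltW.
    have : 0 < a * ku by rewrite mulr_gt0.
    have : 0 < b by rewrite divr_gt0 // mulr_gt0.
    move=> b0 aku cx.
    have h1 : 0 <= b ^+ 2 * (x ^+ 2 - c ^+ 2) by rewrite mulr_ge0 ?sqr_ge0 // subr_ge0.
    have h2 : 0 <= c ^+ 2 * (a * ku) by rewrite mulr_ge0 ?sqr_ge0 // ltW.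
    have h3 : 0 <= (x * (a - ku)) ^+ 2 by rewrite sqr_ge0.
    have -> : (- (x * (a + ku))) ^+ 2 - 4 * (x ^+ 2 - c ^+ 2) * (a * ku - b ^+ 2)
       = (x * (a - ku)) ^+ 2 + 4 * (b ^+ 2 * (x ^+ 2 - c ^+ 2)) + 4 * (c ^+ 2 * (a * ku)) by ring.
    by rewrite !addr_ge0 // mulr_ge0.
  pose d := Num.sqrt (be ^+ 2 - 4 * al * ga).
  have hd : d ^+ 2 = be ^+ 2 - 4 * al * ga by rewrite sqr_sqrtr.
  apply: (@det_quad _ _ _ _ al be ga ((- be + d) / (2 * ga)) ((- be - d) / (2 * ga)) hA).
    by field.
  rewrite (_ : ga * ((- be + d) / (2 * ga) * ((- be - d) / (2 * ga)))
        = (be ^+ 2 - d ^+ 2) / (4 * ga)); last by field.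
  by rewrite hd; field.
rewrite horner_prod -big_split /=; apply: eq_bigr => i _.
exact: fact_i.
Qed.

Lemma sq_le (R : realDomainType) (u v : R) : 0 <= v -> u ^+ 2 <= v ^+ 2 -> u <= v.
Proof. move=> v0 h; nra. Qed.

Lemma sq_lt (R : realDomainType) (u v : R) : 0 <= v -> u ^+ 2 < v ^+ 2 -> u < v.
Proof. move=> v0 h; nra. Qed.

Section Sc.
Variables (R : rcfType) (kn kp ku : R).
Hypotheses (kn0 : 0 < kn) (kp0 : 0 < kp) (ku0 : 0 < ku).

Lemma k1D : k1 kn kp ku ^+ 2 - k2 kn kp ku = 4 * kn * kp * ku - ku ^+ 2.
Proof. rewrite /k1 /k2; ring. Qed.

Lemma k1pos : 0 < k1 kn kp ku.
Proof. by rewrite /k1 addr_gt0 // mulr_gt0. Qed.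

Lemma k2nn : 0 <= k2 kn kp ku.
Proof. by rewrite /k2 addr_ge0 // sqr_ge0. Qed.

Lemma k2pos : 0 < k2 kn kp ku.
Proof. by rewrite /k2 ltr_pwDl ?sqr_ge0 // exprn_gt0. Qed.

Lemma sqs (l : R) : Num.sqrt (1 + l ^+ 2 * k2 kn kp ku) ^+ 2 = 1 + l ^+ 2 * k2 kn kp ku.
Proof. by rewrite sqr_sqrtr // addr_ge0 // mulr_ge0 ?sqr_ge0 ?k2nn. Qed.

Lemma sqs0 (l : R) : 0 <= Num.sqrt (1 + l ^+ 2 * k2 kn kp ku).
Proof. exact: sqrtr_ge0. Qed.

Lemma div2kn (u v : R) : (u / (2 * kn) <= v / (2 * kn)) = (u <= v).
Proof. by rewrite ler_pM2r // invr_gt0 mulr_gt0. Qed.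

Lemma div2kn0 (u : R) : (u / (2 * kn) < 0) = (u < 0).
Proof. by rewrite pmulr_llt0 // invr_gt0 mulr_gt0. Qed.

Hypothesis D0 : 0 < 4 * kn * kp * ku - ku ^+ 2.

Lemma mu1_neg l : l < 0 -> mu1 kn kp ku l < 0.
Proof. by move=> l0; rewrite /mu1 pmulr_rlt0 // divr_gt0. Qed.

Lemma mu2_neg l : l < 0 -> mu2 kn kp ku l < 0.
Proof.
move=> l0; rewrite /mu2 div2kn0 subr_lt0.
apply: (lt_le_trans _ (sqs0 l)).
by rewrite pmulr_llt0 // k1pos.
Qed.

Lemma mu3_neg l : l < 0 -> l ^+ 2 * (4 * kn * kp * ku - ku ^+ 2) > 1 ->
  mu3 kn kp ku l < 0.
Proof.
move=> l0 hl; rewrite /mu3 div2kn0 -ltrBrDl sub0r.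
apply: sq_lt; first by rewrite oppr_ge0 ltW // pmulr_llt0 // k1pos.
rewrite sqs sqrrN exprMn -k1D in hl *; lra.
Qed.

Lemma mu23 l : mu2 kn kp ku l <= mu3 kn kp ku l.
Proof. rewrite /mu2 /mu3 div2kn; have := sqs0 l; lra. Qed.

Lemma mu13 l : mu1 kn kp ku l <= mu3 kn kp ku l.
Proof.
rewrite /mu1 /mu3.
rewrite (_ : kp / kn * l = (2 * kp * l) / (2 * kn)); last by field; rewrite gt_eqF.
rewrite div2kn -lerBlDl /k1.
apply: sq_le; first exact: sqs0.
rewrite sqs /k2.
have : 0 <= l ^+ 2 * ku ^+ 2 by rewrite mulr_ge0 ?sqr_ge0.
move=> h.
rewrite (_ : (2 * kp * l - l * (kp + kn * ku)) ^+ 2 = l ^+ 2 * (kp - kn * ku) ^+ 2);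
  last by ring.
rewrite mulrDr; lra.
Qed.

Lemma mu11 l l' : l <= l' -> mu1 kn kp ku l <= mu1 kn kp ku l'.
Proof. by move=> h; rewrite /mu1 ler_pM2l // divr_gt0. Qed.

Lemma mu33 l l' : l <= l' -> l' < 0 -> mu3 kn kp ku l <= mu3 kn kp ku l'.
Proof.
move=> ll l'0; rewrite /mu3 div2kn.
set k1' := k1 kn kp ku; set k2' := k2 kn kp ku.
have s0 := sqs0 l; have s'0 := sqs0 l'; have hs := sqs l; have hs' := sqs l'.
move: (Num.sqrt (1 + l ^+ 2 * k2')) (Num.sqrt (1 + l' ^+ 2 * k2')) s0 s'0 hs hs' => s s' s0 s'0 hs hs'.
rewrite -/k2' in hs hs'.
have k10 : 0 < k1' := k1pos.
have k20 : 0 < k2' := k2pos.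
have kk : 0 <= k1' ^+ 2 - k2' by rewrite k1D ltW.
have t : - l' * k2' <= k1' * s'.
  apply: sq_le; first by rewrite mulr_ge0 // ltW.
  rewrite !exprMn hs' sqrrN.
  have : 0 <= k1' ^+ 2 * (1 + l' ^+ 2 * k2') - l' ^+ 2 * k2' ^+ 2.
    rewrite (_ : k1' ^+ 2 * (1 + l' ^+ 2 * k2') - l' ^+ 2 * k2' ^+ 2 =
       k1' ^+ 2 + l' ^+ 2 * k2' * (k1' ^+ 2 - k2')); last by ring.
    apply: addr_ge0; first exact: sqr_ge0.
    by apply: mulr_ge0 => //; apply: mulr_ge0; [exact: sqr_ge0 | exact: ltW].
  move=> ?; lra.
set d := l' - l.
have d0 : 0 <= d by rewrite subr_ge0.
have : s <= d * k1' + s'.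
  apply: sq_le; first by rewrite addr_ge0 // mulr_ge0 // ltW.
  have e : (d * k1' + s') ^+ 2 - s ^+ 2 =
     d ^+ 2 * (k1' ^+ 2 - k2') + 2 * d * (k1' * s' + l' * k2').
    rewrite hs /d.
    rewrite (_ : (((l' - l) * k1' + s') ^+ 2) = (l' - l) ^+ 2 * k1' ^+ 2 + 2 * (l' - l) * k1' * s' + s' ^+ 2); last by ring.
    rewrite hs'; ring.
  have : 0 <= d ^+ 2 * (k1' ^+ 2 - k2') + 2 * d * (k1' * s' + l' * k2').
    apply: addr_ge0; first by rewrite mulr_ge0 ?sqr_ge0.
    by apply: mulr_ge0; [rewrite mulr_ge0 | lra].
  move=> ?; lra.
rewrite /d => ?; lra.
Qed.
End Sc.


Lemma poly_ext_ge (R : realFieldType) (p q : {poly R}) (K : R) :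
  (forall x, K <= x -> p.[x] = q.[x]) -> p = q.
Proof.
move=> h; apply/eqP; rewrite -subr_eq0; apply/eqP.
apply: (@roots_geq_poly_eq0 _ _ (mkseq (fun i => K + i%:R) (size (p - q)))).
- apply/allP => y /mapP [i _ ->]; rewrite /root hornerD hornerN h ?subrr //.
  by rewrite lerDl ler0n.
- by apply: mkseq_uniq => i j /addrI /eqP; rewrite eqr_nat => /eqP.
- by rewrite size_mkseq.
Qed.
End Helpers.
Import Helpers.

Theorem lemma1 (R : rcfType) (M : nat) (A : 'M[R]_M) (lam : 'I_M -> R)
    (kn kp ku : R) :
  A^T = A ->
  char_poly A = \prod_(i < M) ('X - (lam i)%:P) ->
  0 < kn -> 0 < kp -> 0 < ku ->
  (* (1) eigenvalues of Q, with multiplicity *)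
  (char_poly (Qmat kn kp ku A) =
     \prod_(i < M) (('X - (mu1 kn kp ku (lam i))%:P) *
                    ('X - (mu2 kn kp ku (lam i))%:P) *
                    ('X - (mu3 kn kp ku (lam i))%:P))
   /\ 0 < k1 kn kp ku /\ 0 < k2 kn kp ku)
  /\
  (* (2) m is the last index M *)
  (forall m : 'I_M, val m = M.-1 ->
     (forall i j : 'I_M, (val i <= val j)%N -> lam i <= lam j) ->
     lam m < 0 ->
     lam m ^+ 2 * (4 * kn * kp * ku - ku ^+ 2) > 1 ->
     (forall (j : 'I_3) (i : 'I_M), mu kn kp ku j (lam i) < 0) /\
     (forall (j : 'I_3) (i : 'I_M),
         mu kn kp ku j (lam i) <= mu3 kn kp ku (lam m))).
Proof.
move=> _ hA kn0 kp0 ku0.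
split.
  split; last by split; [exact: k1pos | exact: k2pos].
  pose S : R := \sum_(i < M) `|kp / kn * lam i|.
  have S0 : (0 : R) <= S by apply: sumr_ge0 => i _.
  apply: (@poly_ext_ge _ _ _ (1 / (2 * kn) + S + 1)) => x hx.
  rewrite evalcp; apply: detQ => //.
    by apply: le_trans hx; rewrite -addrA lerDl addr_ge0.
  move=> i; apply/eqP => e.
  have : `|kp / kn * lam i| <= S.
    rewrite /S (bigD1 i) //= lerDl; exact: sumr_ge0.
  have c0 : 0 < 1 / (2 * kn) by rewrite divr_gt0 // mulr_gt0.
  have := ler_norm (kp / kn * lam i).
  rewrite -e; move=> h1 h2; clear -hx h1 h2 c0 S0; lra.
clear hA; move=> m hm mono lm0 hD.
have D0 : 0 < 4 * kn * kp * ku - ku ^+ 2.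
  rewrite ltNge; apply/negP => h.
  have : lam m ^+ 2 * (4 * kn * kp * ku - ku ^+ 2) <= 0.
    by rewrite mulr_ge0_le0 // sqr_ge0.
  move=> ?; lra.
have le_m : forall i, lam i <= lam m.
  by move=> i; apply: mono; rewrite hm -ltnS prednK ?ltn_ord // (leq_ltn_trans _ (ltn_ord i)).
have neg : forall i, lam i < 0 by move=> i; exact: le_lt_trans (le_m i) lm0.
have big : forall i, lam i ^+ 2 * (4 * kn * kp * ku - ku ^+ 2) > 1.
  move=> i; apply: lt_le_trans hD _; rewrite ler_pM2r //.
  have := le_m i; move=> ?; nra.
split.
  move=> j i; case: j => [[|[|[|j]]] hj] //=; rewrite /mu /=.
  - exact: mu1_neg.
  - exact: mu2_neg.
  - exact: mu3_neg.
move=> j i.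
have m33 : mu3 kn kp ku (lam i) <= mu3 kn kp ku (lam m) by apply: mu33.
case: j => [[|[|[|j]]] hj] //=; rewrite /mu /=.
- have h1 : mu1 kn kp ku (lam i) <= mu1 kn kp ku (lam m) by apply: mu11.
  have h2 : mu1 kn kp ku (lam m) <= mu3 kn kp ku (lam m) by apply: mu13.
  exact: le_trans h1 h2.
- have h1 : mu2 kn kp ku (lam i) <= mu3 kn kp ku (lam i) by apply: mu23.
  exact: le_trans h1 m33.
Qed.
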